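(* Let $g\in G$ and suppose that $\mathbb{G}(\overline{\mathbb{Q}}\cap\mathbb{R})\cap gMg^{-1}$ is infinite. Then there exists $g'\in\mathbb{G}(\overline{\mathbb{Q}}\cap\mathbb{R})$ such that $g\in g'HM$.
   Context: $\mathbb{G}=\mathrm{SO}(Q)$, $Q=2x_0x_1+x_2^2+x_3^2+x_4^2$, realized as $g$ with $g\,\mathrm{diag}(J,I_3)g^T=\mathrm{diag}(J,I_3)$, $J=\begin{pmatrix}0&1\\1&0\end{pmatrix}$; $G=\mathbb{G}(\mathbb{R})\cong\mathrm{SO}(1,4)$. $M=\{\mathrm{diag}(\epsilon I_2,m):\epsilon=\pm1,m\in\mathrm{SO}(3)\}$. $H\cong\mathrm{SO}(1,2)$ is the subgroup of $G$ acting trivially on the coordinates $x_2,x_3$ (i.e. the special isometry group of $2x_0x_1+x_4^2$ on the coordinates $x_0,x_1,x_4$, extended by the identity on $x_2,x_3$). $\overline{\mathbb{Q}}$ is the algebraic closure of $\mathbb{Q}$ in $\mathbb{C}$. *)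

(* Defs.v *)
From HB Require Import structures.
From mathcomp Require Import all_boot all_order all_algebra.
From mathcomp Require Import Rstruct.
Set Implicit Arguments. Unset Strict Implicit. Unset Printing Implicit Defensive.
Import Order.TTheory GRing.Theory Num.Theory.
Local Open Scope ring_scope.

(* Gram matrix of Q = 2 x0 x1 + x2^2 + x3^2 + x4^2, i.e. diag(J, I_3). *)
Definition Smat : 'M[Rdefinitions.R]_5 :=
  \matrix_(i < 5, j < 5)
    if ((i == 0 :> nat) && (j == 1 :> nat)) || ((i == 1 :> nat) && (j == 0 :> nat))
       || (leq 2 i && (i == j)) then 1 else 0.

Definition inG (g : 'M[Rdefinitions.R]_5) : Prop :=
  g *m Smat *m g^T = Smat /\ \det g = 1.

Definition real_algebraic (x : Rdefinitions.R) : Prop :=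
  exists p : {poly rat}, p != 0 /\ root (map_poly ratr p) x.

Definition inGalg (g : 'M[Rdefinitions.R]_5) : Prop :=
  inG g /\ forall i j, real_algebraic (g i j).

Definition inM (m : 'M[Rdefinitions.R]_5) : Prop :=
  exists (eps : Rdefinitions.R) (m3 : 'M[Rdefinitions.R]_3),
    (eps = 1 \/ eps = -1) /\ m3 *m m3^T = 1%:M /\ \det m3 = 1 /\
    m = block_mx (eps%:M : 'M[Rdefinitions.R]_2) 0 0 m3.

(* H = elements of G acting trivially on the coordinates x2, x3 *)
Definition inH (h : 'M[Rdefinitions.R]_5) : Prop :=
  inG h /\ forall i j : 'I_5,
    (nat_of_ord i \in [:: 2%N; 3%N]) || (nat_of_ord j \in [:: 2%N; 3%N]) -> h i j = (i == j)%:R.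

Definition infinite_mxset (P : 'M[Rdefinitions.R]_5 -> Prop) : Prop :=
  ~ exists s : seq 'M[Rdefinitions.R]_5, forall x, P x -> x \in s.

(* Main.v *)
Require Import Defs.
From HB Require Import structures.
From mathcomp Require Import all_boot all_order all_algebra.
From mathcomp Require Import Rstruct.
From mathcomp Require Import ring lra.
From Stdlib Require Import Classical.
Import Order.TTheory GRing.Theory Num.Theory.
Local Open Scope ring_scope.
Set Implicit Arguments. Unset Strict Implicit.

Notation RR := Rdefinitions.R.
Notation alg := real_algebraic.

Lemma algE x : alg x <-> algebraicOver (@ratr RR) x.
Proof. by split=> [[p [? ?]]|[p ? ?]]; exists p. Qed.

Lemma alg_rat (q : rat) : alg (ratr q).
Proof. exact/algE/algebraic_id. Qed.
Lemma alg0 : alg 0. Proof. exact/algE/algebraic0. Qed.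
Lemma alg1 : alg 1. Proof. exact/algE/algebraic1. Qed.
Lemma algN x : alg x -> alg (- x).
Proof. by move/algE/algebraic_opp/algE. Qed.
Lemma algD x y : alg x -> alg y -> alg (x + y).
Proof. by move/algE=> ? /algE ?; apply/algE/algebraic_add. Qed.
Lemma algB x y : alg x -> alg y -> alg (x - y).
Proof. by move/algE=> ? /algE ?; apply/algE/algebraic_sub. Qed.
Lemma algM x y : alg x -> alg y -> alg (x * y).
Proof. by move/algE=> ? /algE ?; apply/algE/algebraic_mul. Qed.
Lemma algV x : alg x -> alg (x^-1).
Proof. by move/algE/algebraic_inv/algE. Qed.
Lemma algn n : alg n%:R.
Proof. by have := alg_rat n%:R; rewrite rmorph_nat. Qed.

Lemma alg_sqrt x : alg x -> alg (Num.sqrt x).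
Proof.
have [x0|x0] := lerP 0 x; last by rewrite ltr0_sqrtr //; move=> _; apply: alg0.
move=> [p [p0 px]]; exists (p \Po 'X^2); split.
  by rewrite comp_poly_eq0 // size_polyXn.
by rewrite /root map_comp_poly horner_comp map_polyXn hornerXn sqr_sqrtr.
Qed.

Lemma alg_sum n (F : 'I_n -> RR) : (forall i, alg (F i)) -> alg (\sum_i F i).
Proof.
move=> H; apply: (big_ind alg) => //; [exact: alg0 | exact: algD].
Qed.

Lemma det_rank1 n (z : 'cV[RR]_n) (y : 'rV[RR]_n) :
  \det (1%:M + z *m y) = 1 + (y *m z) 0 0.
Proof.
have E1 : block_mx 1%:M (-z) 0 1%:M *m block_mx (1%:M + z *m y) 0 y 1%:M
          = block_mx 1%:M (-z) y (1%:M : 'M_1).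
  rewrite mulmx_block !mul1mx !mulmx1 ?mul0mx ?mulmx0 ?add0r ?addr0.
  by rewrite mulNmx addrK.
have E2 : block_mx 1%:M 0 y 1%:M *m block_mx 1%:M (-z) 0 (1%:M + y *m z)
          = block_mx 1%:M (-z) y (1%:M : 'M_1).
  rewrite mulmx_block !mul1mx !mulmx1 ?mul0mx ?mulmx0 ?add0r ?addr0.
  by rewrite mulmxN addrCA addNr addr0.
have := congr1 determinant E1; rewrite -E2 !det_mulmx.
rewrite det_ublock det_lblock det_ublock det_lblock !det1 !mul1r !mulr1.
move=> ->; rewrite det_mx11 !mxE /=; congr (_ + _).
Qed.

Lemma sumsq_eq0 n (z : 'cV[RR]_n) : (z^T *m z) 0 0 = 0 -> z = 0.
Proof.
rewrite !mxE => H; apply/matrixP => i j; rewrite (ord1 j) mxE.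
have : \sum_(k < n) z k 0 ^+ 2 = 0.
  by rewrite -{}[RHS]H; apply: eq_bigr => k _; rewrite mxE expr2.
move/eqP; rewrite psumr_eq0; last by move=> k _; apply: sqr_ge0.
by move/allP/(_ i (mem_index_enum _)); rewrite /= sqrf_eq0 => /eqP.
Qed.

Lemma rank1_SO3 (a b : 'M[RR]_3) (z : 'cV_3) (y : 'rV_3) :
  a *m a^T = 1%:M -> \det a = 1 -> b *m b^T = 1%:M -> \det b = 1 ->
  a - b = z *m y -> a = b.
Proof.
move=> aaT da bbT db Hab.
have bTb : b^T *m b = 1%:M by apply: mulmx1C.
have aTa : a^T *m a = 1%:M by apply: mulmx1C.
pose z' := b^T *m z; pose t := b^T *m a.
have Et : t = 1%:M + z' *m y.
  by rewrite /t /z' -mulmxA -Hab mulmxBr bTb addrC subrK.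
have dt : \det t = 1 by rewrite det_mulmx det_tr da db mulr1.
have yz0 : y *m z' = 0.
  have := det_rank1 z' y; rewrite -Et dt => H.
  have H0 : (y *m z') 0 0 = 0 by apply: (@addrI _ 1); rewrite -H addr0.
  by rewrite [y *m z']mx11_scalar H0 raddf0.
have tz : t *m z' = z' by rewrite Et mulmxDl mul1mx -mulmxA yz0 mulmx0 addr0.
have tTt : t^T *m t = 1%:M.
  by rewrite /t trmx_mul trmxK mulmxA -(mulmxA a^T) bbT mulmx1 aTa.
have tTz : t^T *m z' = z' by rewrite -{1}tz mulmxA tTt mul1mx.
have : y^T *m (z'^T *m z') = 0.
  move: tTz; rewrite Et linearD /= trmx1 trmx_mul mulmxDl mul1mx.
  by rewrite -mulmxA => H; apply: (@addrI _ z'); rewrite H addr0.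
rewrite [z'^T *m z']mx11_scalar mul_mx_scalar => H.
have tb : t = 1%:M -> a = b.
  by move=> t1; rewrite -[a]mul1mx -bbT -mulmxA -/t t1 mulmx1.
apply: tb; rewrite Et.
have [s0|s0] := eqVneq ((z'^T *m z') 0 0) 0.
  by rewrite (sumsq_eq0 s0) mul0mx addr0.
have yT0 : y^T = 0.
  by rewrite -(scale1r y^T) -(mulVf s0) -scalerA H scaler0.
by rewrite -[y]trmxK yT0 trmx0 mulmx0 addr0.
Qed.

Definition Jm : 'M[RR]_2 := \matrix_(i < 2, j < 2) (i != j :> nat)%:R.

Lemma Sblk : Smat = block_mx Jm 0 0 1%:M.
Proof.
apply/matrixP => i j; rewrite /Smat /Jm !mxE.
case: (@splitP 2 3 i) => i' Hi; rewrite ?mxE; case: (@splitP 2 3 j) => j' Hj; rewrite !mxE -val_eqE /= Hi Hj.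
- by case: i' {Hi} => [[|[|i0]] ?] //; case: j' {Hj} => [[|[|j0]] ?].
- by case: i' {Hi} => [[|[|i0]] ?] //; case: j' {Hj} => [[|[|[|j0]]] ?].
- by case: i' {Hi} => [[|[|[|i0]]] ?] //; case: j' {Hj} => [[|[|j0]] ?].
- by case: i' {Hi} => [[|[|[|i0]]] ?] //; case: j' {Hj} => [[|[|[|j0]]] ?].
Qed.

Notation S := Smat.

Lemma JJ : Jm *m Jm = 1%:M.
Proof.
apply/matrixP => i j; rewrite !mxE !big_ord_recr big_ord0 /= !mxE.
by case: i => [[|[|i0]] ?] //; case: j => [[|[|j0]] ?] //=; rewrite ?mulr0 ?mulr1 ?add0r ?addr0.
Qed.

Lemma JT : Jm^T = Jm.
Proof. by apply/matrixP => i j; rewrite !mxE eq_sym. Qed.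

Lemma ST : S^T = S.
Proof.
apply/matrixP => i j; rewrite !mxE.
by case: i => [[|[|[|[|[|i0]]]]] ?] //; case: j => [[|[|[|[|[|j0]]]]] ?].
Qed.

Lemma SS : S *m S = 1%:M.
Proof.
change (@mulmx _ (2+3) (2+3) (2+3) S S = 1%:M).
rewrite Sblk mulmx_block JJ !mulmx0 !mul0mx !mulmx1 !addr0 !add0r.
by rewrite (scalar_mx_block 2 3).
Qed.

Lemma detS : \det S = -1.
Proof.
change (\det (S : 'M_(2+3)) = -1).
rewrite Sblk det_ublock det1 mulr1 (expand_det_row _ 0) !big_ord_recr big_ord0 /=.
rewrite /cofactor !mxE /= !det_mx11 !mxE /=.
by rewrite !mul0r ?mulr0 !add0r mul1r expr1 mulr1.
Qed.

Definition isO (o : 'M[RR]_5) := o *m S *m o^T = S.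

Lemma isO_invE o : isO o -> o *m (S *m o^T *m S) = 1%:M.
Proof. by move=> H; rewrite !mulmxA H SS. Qed.

Lemma isO_unit o : isO o -> o \in unitmx.
Proof. by move/isO_invE/mulmx1_unit => []. Qed.

Lemma isO_inv o : isO o -> invmx o = S *m o^T *m S.
Proof.
move=> H; have u := isO_unit H.
by rewrite -[RHS](mulKmx u) (isO_invE H) mulmx1.
Qed.

Lemma isO_T o : isO o -> o^T *m S *m o = S.
Proof.
move=> H; have := mulmx1C (isO_invE H).
by move/(congr1 (mulmx S)); rewrite !mulmxA SS mul1mx mulmx1.
Qed.

Lemma isO_mul o1 o2 : isO o1 -> isO o2 -> isO (o1 *m o2).
Proof.
by move=> H1 H2; rewrite /isO trmx_mul -!mulmxA (mulmxA o2) (mulmxA _ o2^T) H2 mulmxA H1.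
Qed.

Lemma isO_tr o : isO o -> isO o^T.
Proof. by move=> H; rewrite /isO trmxK isO_T. Qed.

Lemma isO_invmx o : isO o -> isO (invmx o).
Proof.
move=> H; rewrite (isO_inv H) /isO !trmx_mul ST trmxK.
rewrite -!mulmxA (mulmxA S S) SS mul1mx (mulmxA o^T) (mulmxA _ o) (isO_T H).
by rewrite mulmxA SS mul1mx.
Qed.

Lemma isO_det o : isO o -> \det o = 1 \/ \det o = -1.
Proof.
move=> H; have := congr1 determinant H; rewrite !det_mulmx det_tr detS.
move=> E; have : \det o ^+ 2 = 1.
  by rewrite -[RHS]opprK -E; ring.
by move/eqP; rewrite sqrf_eq1 => /orP[/eqP->|/eqP->]; [left|right].
Qed.

Definition bf (u v : 'cV[RR]_5) := (u^T *m S *m v) 0 0.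

Lemma bf_isO o u v : isO o -> bf (o *m u) (o *m v) = bf u v.
Proof.
by move=> H; rewrite /bf trmx_mul -!mulmxA (mulmxA o^T) (mulmxA _ o) (isO_T H) !mulmxA.
Qed.

Lemma bf_sym u v : bf u v = bf v u.
Proof.
rewrite /bf; transitivity ((v^T *m S *m u)^T 0 0); last by rewrite mxE.
by rewrite !trmx_mul trmxK ST mulmxA.
Qed.

Definition blk (e : RR) (a : 'M[RR]_3) : 'M[RR]_5 := block_mx (e%:M : 'M_2) 0 0 a.
Definition emb (z : 'cV[RR]_3) : 'cV[RR]_5 := col_mx (0 : 'cV_2) z.

Lemma blk_emb e a z : blk e a *m emb z = emb (a *m z).
Proof.
have := mul_block_col (e%:M : 'M_2) 0 0 a 0 z.
by rewrite !mulmx0 !mul0mx !addr0 add0r.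
Qed.

Lemma S_emb z : S *m emb z = emb z.
Proof.
have := mul_block_col Jm 0 0 (1%:M : 'M_3) 0 z.
by rewrite !mulmx0 !mul0mx !addr0 add0r mul1mx -Sblk.
Qed.

Lemma emb_tr_emb z w : (emb z)^T *m emb w = z^T *m w.
Proof.
have := tr_col_mx (0 : 'cV_2) z; rewrite trmx0 => H.
rewrite /emb H.
have := mul_row_col (0 : 'rV_2) z^T 0 w; rewrite mul0mx add0r => H2.
exact: H2.
Qed.

Lemma bf_emb z w : bf (emb z) (emb w) = (z^T *m w) 0 0.
Proof. by rewrite /bf -mulmxA S_emb emb_tr_emb. Qed.

Lemma blk_mul e f a b : blk e a *m blk f b = blk (e * f) (a *m b).
Proof.
have := mulmx_block (e%:M : 'M_2) 0 0 a (f%:M : 'M_2) 0 0 b.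
by rewrite !mulmx0 !mul0mx !addr0 !add0r -scalar_mxM.
Qed.

Lemma blk_sub e a b : blk e a - blk e b = blk 0 (a - b).
Proof.
have E : block_mx (e%:M : 'M_2) 0 0 a - block_mx (e%:M : 'M_2) 0 0 b
   = block_mx ((0 : RR)%:M : 'M_2) 0 0 (a - b).
  rewrite opp_block_mx add_block_mx !subrr ?oppr0 ?addr0.
  by congr block_mx; apply/matrixP => i j; rewrite !mxE ?mul0rn ?mulr0n.
exact: E.
Qed.

Lemma blk_det e a : \det (blk e a) = e ^+ 2 * \det a.
Proof.
have := det_ublock (e%:M : 'M_2) 0 a; rewrite det_scalar => H; exact: H.
Qed.

Lemma blk_tr e a : (blk e a)^T = blk e a^T.
Proof.
have := tr_block_mx (e%:M : 'M_2) 0 0 a; rewrite !trmx0 tr_scalar_mx => H; exact: H.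
Qed.

Lemma blk_isO e a : e ^+ 2 = 1 -> a *m a^T = 1%:M -> isO (blk e a).
Proof.
move=> e2 aa; rewrite /isO blk_tr.
have E : block_mx (e%:M : 'M_2) 0 0 a *m block_mx Jm 0 0 1%:M
           *m block_mx (e%:M : 'M_2) 0 0 a^T = block_mx Jm 0 0 (1%:M : 'M_3).
  rewrite !mulmx_block ?mulmx0 ?mul0mx ?addr0 ?add0r ?mulmx1 ?aa.
  rewrite mul_scalar_mx mul_mx_scalar scalerA -expr2 e2 scale1r.
  by congr block_mx; apply/matrixP=> i j; rewrite !mxE big1 // => k _; rewrite mxE mul0r.
by move: E; rewrite -Sblk.
Qed.

Lemma blk11 : blk 1 1%:M = 1%:M.
Proof. by have := scalar_mx_block 2 3 (1 : RR); move=> H; rewrite /blk; exact: (esym H). Qed.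

Lemma blk_inv e a : e ^+ 2 = 1 -> a *m a^T = 1%:M -> invmx (blk e a) = blk e a^T.
Proof.
move=> e2 aa; have H : blk e a *m blk e a^T = 1%:M.
  by rewrite blk_mul -expr2 e2 aa blk11.
have [u _] := mulmx1_unit H.
by rewrite -[RHS](mulKmx u) H mulmx1.
Qed.

Definition algm m n (A : 'M[RR]_(m, n)) := forall i j, alg (A i j).

Lemma algm_mul m n p (A : 'M_(m, n)) (B : 'M_(n, p)) : algm A -> algm B -> algm (A *m B).
Proof. by move=> hA hB i j; rewrite mxE; apply: alg_sum => k; apply: algM. Qed.
Lemma algm_add m n (A B : 'M_(m, n)) : algm A -> algm B -> algm (A + B).
Proof. by move=> hA hB i j; rewrite mxE; apply: algD. Qed.
Lemma algm_opp m n (A : 'M_(m, n)) : algm A -> algm (- A).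
Proof. by move=> hA i j; rewrite mxE; apply: algN. Qed.
Lemma algm_sub m n (A B : 'M_(m, n)) : algm A -> algm B -> algm (A - B).
Proof. by move=> hA hB; apply: algm_add => //; apply: algm_opp. Qed.
Lemma algm_tr m n (A : 'M_(m, n)) : algm A -> algm A^T.
Proof. by move=> hA i j; rewrite mxE. Qed.
Lemma algm_scale m n c (A : 'M_(m, n)) : alg c -> algm A -> algm (c *: A).
Proof. by move=> hc hA i j; rewrite mxE; apply: algM. Qed.
Lemma algm_scalar n c : alg c -> algm (c%:M : 'M_n).
Proof. by move=> hc i j; rewrite mxE; case: (i == j); rewrite ?mulr1n ?mulr0n //; apply: alg0. Qed.
Lemma algm1 n : algm (1%:M : 'M_n). Proof. exact: algm_scalar alg1. Qed.
Lemma algm0 m n : algm (0 : 'M_(m, n)). Proof. by move=> i j; rewrite mxE; apply: alg0. Qed.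
Lemma algm_delta m n (i0 : 'I_m) (j0 : 'I_n) : algm (delta_mx i0 j0).
Proof. by move=> i j; rewrite mxE; case: (_ && _); [apply: alg1 | apply: alg0]. Qed.
Lemma algmS : algm S.
Proof. by move=> i j; rewrite mxE; case: ifP => _; [apply: alg1 | apply: alg0]. Qed.
Lemma algm_col m n j (A : 'M_(m, n)) : algm A -> algm (col j A).
Proof. by move=> hA i k; rewrite mxE. Qed.
Lemma alg_bf u v : algm u -> algm v -> alg (bf u v).
Proof. by move=> hu hv; apply: algm_mul => //; apply: algm_mul => //; [apply: algm_tr | apply: algmS]. Qed.

Lemma algm_invO o : isO o -> algm o -> algm (invmx o).
Proof.
by move=> H ho; rewrite (isO_inv H); apply: algm_mul; [apply: algm_mul; [apply: algmS|apply: algm_tr]|apply: algmS].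
Qed.

Lemma bfDr x y z : bf x (y + z) = bf x y + bf x z.
Proof. by rewrite /bf mulmxDr mxE. Qed.
Lemma bfDl x y z : bf (x + y) z = bf x z + bf y z.
Proof. by rewrite bf_sym bfDr !(bf_sym z). Qed.
Lemma bfZr x a y : bf x (a *: y) = a * bf x y.
Proof. by rewrite /bf -scalemxAr mxE. Qed.
Lemma bfZl x a y : bf (a *: x) y = a * bf x y.
Proof. by rewrite bf_sym bfZr bf_sym. Qed.
Lemma bfNr x y : bf x (- y) = - bf x y.
Proof. by rewrite -scaleN1r bfZr mulN1r. Qed.
Lemma bfNl x y : bf (- x) y = - bf x y.
Proof. by rewrite bf_sym bfNr bf_sym. Qed.
Lemma bfBr x y z : bf x (y - z) = bf x y - bf x z.
Proof. by rewrite bfDr bfNr. Qed.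
Lemma bfBl x y z : bf (x - y) z = bf x z - bf y z.
Proof. by rewrite bfDl bfNl. Qed.

Lemma mx_entry_delta n (M : 'M[RR]_n) i j :
  ((delta_mx i 0 : 'cV_n)^T *m M *m (delta_mx j 0 : 'cV_n)) 0 0 = M i j.
Proof. by rewrite -mulmxA -colE trmx_delta -rowE !mxE. Qed.

Lemma isO_bf o : (forall x y, bf (o *m x) (o *m y) = bf x y) -> isO o.
Proof.
move=> H; suff E : o^T *m S *m o = S.
  by have := @isO_tr o^T; rewrite /isO !trmxK; apply.
apply/matrixP => i j; rewrite -mx_entry_delta -(mx_entry_delta S) -/(bf _ _) -H.
by rewrite /bf !trmx_mul !mulmxA.
Qed.

Definition refl (v : 'cV[RR]_5) : 'M[RR]_5 := 1%:M - (2 / bf v v) *: (v *m (v^T *m S)).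

Lemma refl_apply v x : refl v *m x = x - (2 / bf v v * bf v x) *: v.
Proof.
rewrite /refl mulmxBl mul1mx -scalemxAl -!mulmxA (mulmxA v^T).
by rewrite [v^T *m S *m x]mx11_scalar mul_mx_scalar scalerA.
Qed.

Lemma refl_isO v : bf v v != 0 -> isO (refl v).
Proof.
move=> nz; apply: isO_bf => x y; rewrite !refl_apply.
rewrite !(bfBl, bfBr, bfZl, bfZr) (bf_sym x v).
by field.
Qed.

Lemma refl_fix v z : bf v z = 0 -> refl v *m z = z.
Proof. by move=> h; rewrite refl_apply h mulr0 scale0r subr0. Qed.

Lemma refl_det v : bf v v != 0 -> \det (refl v) = -1.
Proof.
move=> nz.
have -> : refl v = 1%:M + ((- (2 / bf v v)) *: v) *m (v^T *m S).
  by rewrite /refl -scalemxAl scaleNr.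
rewrite det_rank1 -scalemxAr mxE -/(bf v v).
by field.
Qed.

Lemma algm_refl v : algm v -> algm (refl v).
Proof.
move=> hv; apply: algm_sub; first exact: algm1.
apply: algm_scale; first by apply: algM; [apply: (algn 2)|apply: algV; apply: alg_bf].
by apply: algm_mul => //; apply: algm_mul; [apply: algm_tr|apply: algmS].
Qed.

Lemma witt1 x y : algm x -> algm y -> bf x x = bf y y -> bf x x != 0 ->
  exists o, [/\ algm o, isO o, o *m x = y &
    forall z, bf x z = 0 -> bf y z = 0 -> o *m z = z].
Proof.
move=> hx hy exy nz.
have Hm : bf (x - y) (x - y) = 2 * (bf x x - bf x y).
  by rewrite !(bfBl, bfBr) (bf_sym y x) -exy; ring.
have Hp : bf (x + y) (x + y) = 2 * (bf x x + bf x y).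
  by rewrite !(bfDl, bfDr) (bf_sym y x) -exy; ring.
have two0 : (2 : RR) != 0 by rewrite pnatr_eq0.
have [nzm|zm] := eqVneq (bf (x - y) (x - y)) 0; last first.
  exists (refl (x - y)); split.
  - by apply: algm_refl; apply: algm_sub.
  - exact: refl_isO.
  - rewrite refl_apply.
    have -> : 2 / bf (x - y) (x - y) * bf (x - y) x = 1.
      move: zm; rewrite Hm bfBl (bf_sym y x) mulf_eq0 negb_or => /andP[_ zm].
      by field.
    by rewrite scale1r opprB addrC subrK.
  - by move=> z h1 h2; apply: refl_fix; rewrite bfBl h1 h2 subrr.
have zp : bf x x + bf x y != 0.
  apply: contra nz => /eqP H2; apply/eqP.
  move: nzm; rewrite Hm => /eqP; rewrite mulf_eq0 (negPf two0) /= => /eqP H.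
  have : (bf x x - bf x y) + (bf x x + bf x y) = 0 by rewrite H H2 addr0.
  move=> H3; have : 2 * bf x x = 0 by rewrite -H3; ring.
  by move/eqP; rewrite mulf_eq0 (negPf two0) => /eqP.
have nzy : bf y y != 0 by rewrite -exy.
exists (refl y *m refl (x + y)); split.
- by apply: algm_mul; apply: algm_refl => //; apply: algm_add.
- by apply: isO_mul; apply: refl_isO => //; rewrite Hp mulf_neq0.
- rewrite -mulmxA [refl (x + y) *m x]refl_apply.
  have -> : 2 / bf (x + y) (x + y) * bf (x + y) x = 1.
    by rewrite Hp bfDl (bf_sym y x); field.
  rewrite scale1r opprD addrA subrr add0r refl_apply bfNr.
  have -> : 2 / bf y y * - bf y y = -2 by field.
  by rewrite scaleNr opprK -[2]/(1 + 1) scalerDl scale1r addrA addNr add0r.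
- move=> z h1 h2; have hz : bf (x + y) z = 0 by rewrite bfDl h1 h2 addr0.
  by rewrite -mulmxA (refl_fix hz) (refl_fix h2).
Qed.

Definition Eb (k : 'I_3) : 'cV[RR]_5 := emb (delta_mx k 0).

Lemma bf_E k l : bf (Eb k) (Eb l) = (k == l)%:R.
Proof. by rewrite /Eb bf_emb trmx_delta mul_delta_mx_cond mulmxnE mxE. Qed.

Lemma algm_emb z : algm z -> algm (emb z).
Proof.
move=> hz i j; rewrite /emb mxE; case: split => k; rewrite ?mxE //; exact: alg0.
Qed.

Lemma algm_E k : algm (Eb k).
Proof. by apply: algm_emb; apply: algm_delta. Qed.

Lemma witt2 e f : algm e -> algm f -> bf e e = 1 -> bf f f = 1 -> bf e f = 0 ->
  exists r, [/\ algm r, isO r, \det r = 1, r *m e = Eb 0 & r *m f = Eb 1].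
Proof.
move=> he hf ee ff ef.
have one0 : (1 : RR) != 0 by rewrite oner_eq0.
have [o1 [a1 O1 o1e fix1]] : exists o, [/\ algm o, isO o, o *m e = Eb 0 &
    forall z, bf e z = 0 -> bf (Eb 0) z = 0 -> o *m z = z].
  by apply: witt1 => //; [apply: algm_E | rewrite ee bf_E | rewrite ee].
pose f1 := o1 *m f.
have hf1 : algm f1 by apply: algm_mul.
have f1f1 : bf f1 f1 = 1 by rewrite bf_isO.
have f1E0 : bf f1 (Eb 0) = 0 by rewrite -o1e bf_isO // bf_sym.
have [o2 [a2 O2 o2f fix2]] : exists o, [/\ algm o, isO o, o *m f1 = Eb 1 &
    forall z, bf f1 z = 0 -> bf (Eb 1) z = 0 -> o *m z = z].
  by apply: witt1 => //; [apply: algm_E | rewrite f1f1 bf_E | rewrite f1f1].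
have o2E0 : o2 *m Eb 0 = Eb 0 by apply: fix2 => //; rewrite bf_E.
pose r0 := o2 *m o1.
have r0e : r0 *m e = Eb 0 by rewrite -mulmxA o1e.
have r0f : r0 *m f = Eb 1 by rewrite -mulmxA -/f1 o2f.
have Or0 : isO r0 by apply: isO_mul.
have ar0 : algm r0 by apply: algm_mul.
case: (isO_det Or0) => d0; first by exists r0; split.
have n2 : bf (Eb 2) (Eb 2) != 0 by rewrite bf_E eqxx.
exists (refl (Eb 2) *m r0); split.
- by apply: algm_mul => //; apply: algm_refl; apply: algm_E.
- by apply: isO_mul => //; apply: refl_isO.
- by rewrite det_mulmx refl_det // d0 mulrNN mulr1.
- by rewrite -mulmxA r0e refl_fix // bf_E.
- by rewrite -mulmxA r0f refl_fix // bf_E.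
Qed.

Definition frameL (p0 p1 p2 q0 q1 q2 : RR) : seq (seq RR) :=
  [:: [:: p0; q0; p1 * q2 - p2 * q1];
      [:: p1; q1; p2 * q0 - p0 * q2];
      [:: p2; q2; p0 * q1 - p1 * q0]].

Definition frame p0 p1 p2 q0 q1 q2 : 'M[RR]_3 :=
  \matrix_(i < 3, j < 3) nth 0 (nth [::] (frameL p0 p1 p2 q0 q1 q2) i) j.

Lemma frame_det p0 p1 p2 q0 q1 q2 :
  \det (frame p0 p1 p2 q0 q1 q2) =
  (p1 * q2 - p2 * q1)^+2 + (p2 * q0 - p0 * q2)^+2 + (p0 * q1 - p1 * q0)^+2.
Proof.
rewrite (expand_det_row _ 0) !big_ord_recr big_ord0 /= /cofactor.
rewrite !(expand_det_row _ 0) !big_ord_recr !big_ord0 /= /cofactor !det_mx11 !mxE /=.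
ring.
Qed.

Definition o0 : 'I_3 := @Ordinal 3 0 isT.
Definition o1 : 'I_3 := @Ordinal 3 1 isT.
Definition o2 : 'I_3 := @Ordinal 3 2 isT.

Lemma sum3 (F : 'I_3 -> RR) : \sum_(k < 3) F k = F o0 + F o1 + F o2.
Proof.
rewrite !big_ord_recr big_ord0 /= add0r.
by congr (F _ + F _ + F _); apply: val_inj.
Qed.

Lemma frame_orth p0 p1 p2 q0 q1 q2 :
  p0 * p0 + p1 * p1 + p2 * p2 = 1 -> q0 * q0 + q1 * q1 + q2 * q2 = 1 ->
  p0 * q0 + p1 * q1 + p2 * q2 = 0 ->
  (frame p0 p1 p2 q0 q1 q2)^T *m frame p0 p1 p2 q0 q1 q2 = 1%:M.
Proof.
move=> hp hq hpq; apply/matrixP => i j; rewrite !mxE sum3 !mxE /=.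
have hn : (p1 * q2 - p2 * q1) * (p1 * q2 - p2 * q1) + (p2 * q0 - p0 * q2) * (p2 * q0 - p0 * q2)
   + (p0 * q1 - p1 * q0) * (p0 * q1 - p1 * q0) = 1.
  have -> : (p1 * q2 - p2 * q1) * (p1 * q2 - p2 * q1) + (p2 * q0 - p0 * q2) * (p2 * q0 - p0 * q2)
   + (p0 * q1 - p1 * q0) * (p0 * q1 - p1 * q0) =
   (p0 * p0 + p1 * p1 + p2 * p2) * (q0 * q0 + q1 * q1 + q2 * q2) - (p0 * q0 + p1 * q1 + p2 * q2) ^+ 2 by ring.
  by rewrite hp hq hpq; ring.
case: i => [[|[|[|?]]] ?] //; case: j => [[|[|[|?]]] ?] //=;
  rewrite ?hp ?hq ?hn //;
  first [ring | by transitivity (p0 * q0 + p1 * q1 + p2 * q2); [ring | exact hpq]].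
Qed.

Lemma frame_ok (p q : 'cV[RR]_3) :
  (p^T *m p) 0 0 = 1 -> (q^T *m q) 0 0 = 1 -> (p^T *m q) 0 0 = 0 ->
  exists m3 : 'M[RR]_3, [/\ m3 *m m3^T = 1%:M, \det m3 = 1,
    m3 *m delta_mx 0 0 = p & m3 *m delta_mx o1 0 = q].
Proof.
rewrite !mxE !sum3 !mxE => hp hq hpq.
pose m3 := frame (p o0 0) (p o1 0) (p o2 0) (q o0 0) (q o1 0) (q o2 0).
have orth : m3^T *m m3 = 1%:M by apply: frame_orth.
exists m3; split.
- exact: mulmx1C.
- have E : forall a0 a1 a2 b0 b1 b2 : RR,
      (a1*b2 - a2*b1)^+2 + (a2*b0 - a0*b2)^+2 + (a0*b1-a1*b0)^+2 =
      (a0*a0+a1*a1+a2*a2)*(b0*b0+b1*b1+b2*b2) - (a0*b0+a1*b1+a2*b2)^+2.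
    by move=> *; ring.
  by rewrite frame_det E hp hq hpq; ring.
- apply/matrixP => i j; rewrite (ord1 j) -colE !mxE.
  by case: i => [[|[|[|?]]] ?] //=; congr (p _ 0); apply: val_inj.
- apply/matrixP => i j; rewrite (ord1 j) -colE !mxE.
  by case: i => [[|[|[|?]]] ?] //=; congr (q _ 0); apply: val_inj.
Qed.

Lemma Eb_delta k : Eb k = delta_mx (rshift 2 k) 0.
Proof. by rewrite /Eb /emb delta_mx_dshift. Qed.

Lemma inH_of h : isO h -> \det h = 1 -> h *m Eb 0 = Eb 0 -> h *m Eb o1 = Eb o1 -> inH h.
Proof.
move=> Oh dh h0 h1; split; first by split.
have colP k : h *m Eb k = Eb k -> forall i, h i (rshift 2 k) = (i == rshift 2 k)%:R.
  move=> hk i; have := congr1 (fun M : 'cV[RR]_5 => M i 0) hk.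
  by rewrite Eb_delta -colE !mxE eqxx andbT.
have rowP k : h *m Eb k = Eb k -> forall i, h (rshift 2 k) i = (rshift 2 k == i)%:R.
  move=> hk; have ui := isO_unit Oh.
  have E1 : invmx h *m Eb k = Eb k by rewrite -{1}hk mulKmx.
  have E2 : h^T *m Eb k = Eb k.
    move: E1; rewrite (isO_inv Oh) -!mulmxA S_emb => /(congr1 (mulmx S)).
    by rewrite (mulmxA S S) SS mul1mx /Eb S_emb.
  move=> i; have := congr1 (fun M : 'cV[RR]_5 => M i 0) E2.
  by rewrite Eb_delta -colE !mxE eqxx andbT eq_sym.
move=> i j /orP[] Hij.
- have [->|->] : i = rshift 2 0 \/ i = rshift 2 o1.
    by move: Hij; rewrite !inE => /orP[] /eqP H; [left|right]; apply/val_inj.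
  + by rewrite rowP.
  + by rewrite rowP.
- have [->|->] : j = rshift 2 0 \/ j = rshift 2 o1.
    by move: Hij; rewrite !inE => /orP[] /eqP H; [left|right]; apply/val_inj.
  + by rewrite colP.
  + by rewrite colP.
Qed.

Lemma emb_sub x y : emb (x - y) = emb x - emb y.
Proof.
apply/matrixP => i j; rewrite /emb !mxE; case: split => k; rewrite !mxE //.
by rewrite subrr.
Qed.

Lemma emb_scale c x : emb (c *: x) = c *: emb x.
Proof.
apply/matrixP => i j; rewrite /emb !mxE; case: split => k; rewrite !mxE //.
by rewrite mulr0.
Qed.

Lemma sq_pos (z : 'cV[RR]_3) : z != 0 -> 0 < (z^T *m z) 0 0.
Proof.
move=> nz; rewrite lt_def; apply/andP; split.
  by apply: contra nz => /eqP H; apply/eqP; apply: sumsq_eq0.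
rewrite mxE; apply: sumr_ge0 => k _; rewrite mxE; by rewrite -expr2 sqr_ge0.
Qed.

Lemma blk0_col (D : 'M[RR]_3) (u : 'cV_2) (d : 'cV_3) :
  blk 0 D *m (col_mx u d : 'cV_5) = emb (D *m d).
Proof.
have := mul_block_col ((0 : RR)%:M : 'M_2) 0 0 D u d.
rewrite mul_scalar_mx scale0r !mul0mx !add0r => H; exact: H.
Qed.

Lemma col_split (A : 'M[RR]_5) j :
  col j A = col_mx (col j (usubmx (A : 'M_(2+3,5)))) (col j (dsubmx (A : 'M_(2+3,5)))).
Proof. by have := col_col_mx j (usubmx (A : 'M_(2+3,5))) (dsubmx (A : 'M_(2+3,5))); rewrite vsubmxK. Qed.

Lemma GdGr (g : 'M[RR]_5) : g \in unitmx ->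
  dsubmx (invmx g : 'M_(2+3,5)) *m rsubmx (g : 'M_(5,2+3)) = 1%:M.
Proof.
move=> ug; pose gi' : 'M[RR]_(2+3, 2+3) := invmx g; pose g' : 'M[RR]_(2+3, 2+3) := g.
have H : gi' *m g' = 1%:M := mulVmx ug.
move: H; rewrite -[gi']vsubmxK -[g']hsubmxK mul_col_row (scalar_mx_block 2 3).
by case/eq_block_mx.
Qed.

Lemma core (g : 'M[RR]_5) (e : RR) (a b : 'M[RR]_3) :
  inG g -> e ^+ 2 = 1 -> a *m a^T = 1%:M -> \det a = 1 -> b *m b^T = 1%:M -> \det b = 1 ->
  algm (g *m blk e a *m invmx g) -> algm (g *m blk e b *m invmx g) ->
  g *m blk e a *m invmx g <> g *m blk e b *m invmx g ->
  exists g', inGalg g' /\ exists h m, inH h /\ inM m /\ g = g' *m h *m m.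
Proof.
move=> [Og dg] e2 aa da bb db hA hB neq.
have ug := isO_unit Og.
pose gi := invmx g.
pose D := g *m blk e a *m gi - g *m blk e b *m gi.
have aD : algm D by apply: algm_sub.
have HD : D = g *m blk 0 (a - b) *m gi by rewrite /D -mulmxBl -mulmxBr blk_sub.
pose Gd := dsubmx (gi : 'M_(2+3,5)). pose Gr := rsubmx (g : 'M_(5,2+3)).
have GG : Gd *m Gr = 1%:M by apply: GdGr.
pose X := (a - b) *m Gd.
have colD : forall j, gi *m col j D = emb (col j X).
  move=> j; rewrite HD [in LHS]colE /gi -!mulmxA mulKmx // -colE col_split blk0_col.
  by rewrite /X /Gd !colE mulmxA.
have Dab : a - b = X *m Gr by rewrite /X -mulmxA GG mulmx1.
have ab_contra : a = b -> False by move=> ab; apply: neq; rewrite ab.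
case: (pickP (fun j => col j X != 0)) => [j Hj | H0]; last first.
  exfalso; apply: ab_contra; apply/eqP; rewrite -subr_eq0 Dab.
  suff -> : X = 0 by rewrite mul0mx.
  apply/matrixP => i k; have := H0 k; rewrite /= => /negbFE/eqP.
  by move/(congr1 (fun M : 'cV[RR]_3 => M i 0)); rewrite !mxE.
pose z := col j X.
have zz0 := sq_pos Hj.
pose zz := (z^T *m z) 0 0.
pose c := fun k => ((z^T *m col k X) 0 0) / zz.
case: (pickP (fun k => col k X - c k *: z != 0)) => [k Hk | H1]; last first.
  exfalso; apply: ab_contra.
  apply: (rank1_SO3 aa da bb db (z := z) (y := (\row_k c k) *m Gr)).
  rewrite Dab mulmxA; congr (_ *m _).
  apply/matrixP => i k; have := H1 k; rewrite /= => /negbFE/eqP.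
  move/(congr1 (fun M : 'cV[RR]_3 => M i 0)); rewrite !mxE big_ord1 !mxE.
  by move=> /eqP; rewrite subr_eq0 => /eqP ->; rewrite mulrC.
pose xk := col k X.
pose w := xk - c k *: z.
have ww0 := sq_pos Hk.
pose u := col j D; pose v := col k D.
have gu : u = g *m emb z by rewrite -colD /gi mulKVmx.
have gv : v = g *m emb xk by rewrite -colD /gi mulKVmx.
have uu : bf u u = zz by rewrite gu bf_isO // bf_emb.
have uv : bf u v = (z^T *m xk) 0 0 by rewrite gu gv bf_isO // bf_emb.
pose cc := bf u v / bf u u.
have ccE : cc = c k by rewrite /cc uu uv.
pose v' := v - cc *: u.
have gv' : v' = g *m emb w.
  by rewrite /v' gu gv ccE /w emb_sub emb_scale mulmxBr scalemxAr.
have vv : bf v' v' = (w^T *m w) 0 0 by rewrite gv' bf_isO // bf_emb.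
have au : algm u by apply: algm_col.
have av : algm v by apply: algm_col.
have acc : alg cc by apply: algM; [apply: alg_bf | apply: algV; apply: alg_bf].
have av' : algm v' by apply: algm_sub => //; apply: algm_scale.
pose su := Num.sqrt (bf u u); pose sv := Num.sqrt (bf v' v').
have su0 : 0 < su by rewrite sqrtr_gt0 uu.
have sv0 : 0 < sv by rewrite sqrtr_gt0 vv.
have su2 : su ^+ 2 = bf u u by rewrite sqr_sqrtr // uu ltW.
have sv2 : sv ^+ 2 = bf v' v' by rewrite sqr_sqrtr // vv ltW.
have suN : su != 0 by rewrite gt_eqF.
have svN : sv != 0 by rewrite gt_eqF.
pose ef := su^-1 *: u; pose ff := sv^-1 *: v'.
have aef : algm ef by apply: algm_scale => //; apply: algV; apply: alg_sqrt; apply: alg_bf.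
have aff : algm ff by apply: algm_scale => //; apply: algV; apply: alg_sqrt; apply: alg_bf.
have eef : bf ef ef = 1.
  by rewrite /ef bfZl bfZr -su2; field.
have fff : bf ff ff = 1.
  by rewrite /ff bfZl bfZr -sv2; field.
have uv'0 : bf u v' = 0.
  rewrite /v' bfBr bfZr /cc; field; by rewrite -su2 expf_neq0.
have eff : bf ef ff = 0 by rewrite /ef /ff bfZl bfZr uv'0 !mulr0.
have [r [ar Or dr re rf]] := witt2 aef aff eef fff eff.
pose p := su^-1 *: z; pose q := sv^-1 *: w.
have gep : ef = g *m emb p by rewrite /ef gu /p emb_scale scalemxAr.
have gfq : ff = g *m emb q by rewrite /ff gv' /q emb_scale scalemxAr.
have pp : (p^T *m p) 0 0 = 1 by rewrite -bf_emb -(bf_isO _ _ Og) -gep eef.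
have qq : (q^T *m q) 0 0 = 1 by rewrite -bf_emb -(bf_isO _ _ Og) -gfq fff.
have pq : (p^T *m q) 0 0 = 0 by rewrite -bf_emb -(bf_isO _ _ Og) -gep -gfq eff.
have [m3 [m3o dm3 m3p m3q]] := frame_ok pp qq pq.
have m3To : m3^T *m m3 = 1%:M by apply: mulmx1C.
have o1E : (1 : 'I_3) = o1 by apply/val_inj.
pose m' := blk 1 m3.
exists (invmx r); split.
  split; last exact: algm_invO.
  by split; [exact: isO_invmx | rewrite det_inv dr invr1].
exists (r *m g *m m'), (blk 1 m3^T); split; [|split].
- apply: inH_of.
  + apply: isO_mul; first by apply: isO_mul.
    by apply: blk_isO => //; rewrite expr1n.
  + by rewrite !det_mulmx dr dg blk_det dm3 expr1n !mulr1.
  + by rewrite /Eb -!mulmxA blk_emb m3p -gep re.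
  + by rewrite /Eb -!mulmxA blk_emb m3q -gfq rf o1E.
- exists 1, m3^T; split; first by left.
  by rewrite trmxK m3To det_tr dm3.
- rewrite /m' -!mulmxA blk_mul mul1r m3o blk11 mulmx1 mulmxA mulVmx ?mul1mx //.
  exact: isO_unit.
Qed.


Lemma key (g x y : 'M[RR]_5) (e : RR) (a b : 'M[RR]_3) :
  inG g -> inGalg x -> inGalg y -> x <> y -> (e = 1 \/ e = -1) ->
  a *m a^T = 1%:M -> \det a = 1 -> b *m b^T = 1%:M -> \det b = 1 ->
  x = g *m blk e a *m invmx g -> y = g *m blk e b *m invmx g ->
  exists g', inGalg g' /\ exists h m, inH h /\ inM m /\ g = g' *m h *m m.
Proof.
move=> Gg [_ ax] [_ ay] nxy he aa da bb db Ex Ey.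
have e2 : e ^+ 2 = 1 by case: he => ->; rewrite ?sqrrN expr1n.
by apply: (core Gg e2 aa da bb db); rewrite -?Ex -?Ey.
Qed.

Unset Implicit Arguments.
Theorem lemma6 (g : 'M[Rdefinitions.R]_5) :
  inG g ->
  infinite_mxset (fun x => inGalg x /\
                    exists m, inM m /\ x = g *m m *m invmx g) ->
  exists g', inGalg g' /\
    exists h m, inH h /\ inM m /\ g = g' *m h *m m.
Proof.
move=> Gg Hinf.
have ex : forall s : seq 'M[RR]_5, exists x, (inGalg x /\
                    exists m, inM m /\ x = g *m m *m invmx g) /\ x \notin s.
  move=> s; apply: NNPP => H; apply: Hinf; exists s => x Px.
  apply/negPn/negP => nx; apply: H; exists x; split => //.
have [x1 [[A1 [m1 [[e1 [a1 [he1 [aa1 [da1 Em1]]]]] Ex1]]] _]] := ex [::].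
have [x2 [[A2 [m2 [[e2 [a2 [he2 [aa2 [da2 Em2]]]]] Ex2]]] n2]] := ex [:: x1].
have [x3 [[A3 [m3 [[e3 [a3 [he3 [aa3 [da3 Em3]]]]] Ex3]]] n3]] := ex [:: x1; x2].
subst m1 m2 m3.
move: n2 n3; rewrite !inE negb_or => n21 /andP[n31 n32].
have ne : forall x y : 'M[RR]_5, x != y -> x <> y by move=> x y /eqP.
have [E12|N12] := eqVneq e1 e2.
  subst e2; exact: (key Gg A2 A1 (ne _ _ n21) he1 aa2 da2 aa1 da1 Ex2 Ex1).
have [E13|N13] := eqVneq e1 e3.
  subst e3; exact: (key Gg A3 A1 (ne _ _ n31) he1 aa3 da3 aa1 da1 Ex3 Ex1).
have E23 : e2 = e3.
  by move: N12 N13; case: he1 => ->; case: he2 => ->; case: he3 => -> //;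
     rewrite ?eqxx //.
subst e3; exact: (key Gg A3 A2 (ne _ _ n32) he2 aa3 da3 aa2 da2 Ex3 Ex2).
Qed.
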